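(* Let $\{R_\alpha\}$ be a collection of $\star$-rings and let $R=\prod_\alpha R_\alpha$ with componentwise involution. Then $R$ is weakly $\star$-clean if and only if each $R_\alpha$ is weakly $\star$-clean and at most one $R_\alpha$ is not $\star$-clean.
   Context: Rings are associative with identity. A $\star$-ring is a ring with a map $\star$ satisfying $(x+y)^\star=x^\star+y^\star$, $(xy)^\star=y^\star x^\star$, $(x^\star)^\star=x$. A projection is $p$ with $p^2=p=p^\star$; $P(R)$ is the set of projections, $U(R)$ the units. $R$ is $\star$-clean if every element is $u+p$ with $u\in U(R)$, $p\in P(R)$. An element $x$ is weakly $\star$-clean if $x=u+p$ or $x=u-p$ with $u\in U(R)$, $p\in P(R)$; $R$ is weakly $\star$-clean if all its elements are. *)

(* Defs.v *)
From Stdlib Require Import FunctionalExtensionality.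

Set Implicit Arguments.

Record StarRing := {
  carrier :> Type;
  zero : carrier;
  one : carrier;
  add : carrier -> carrier -> carrier;
  opp : carrier -> carrier;
  mul : carrier -> carrier -> carrier;
  star : carrier -> carrier;
  addA : forall x y z, add x (add y z) = add (add x y) z;
  addC : forall x y, add x y = add y x;
  add0 : forall x, add zero x = x;
  addN : forall x, add (opp x) x = zero;
  mulA : forall x y z, mul x (mul y z) = mul (mul x y) z;
  mul1l : forall x, mul one x = x;
  mul1r : forall x, mul x one = x;
  mulDl : forall x y z, mul (add x y) z = add (mul x z) (mul y z);
  mulDr : forall x y z, mul x (add y z) = add (mul x y) (mul x z);
  starD : forall x y, star (add x y) = add (star x) (star y);
  starM : forall x y, star (mul x y) = mul (star y) (star x);
  starK : forall x, star (star x) = x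
}.

Arguments zero {s}. Arguments one {s}.
Arguments add {s}. Arguments opp {s}. Arguments mul {s}. Arguments star {s}.

Definition is_unit {R : StarRing} (u : R) : Prop :=
  exists v : R, mul u v = one /\ mul v u = one.

Definition is_proj {R : StarRing} (p : R) : Prop :=
  mul p p = p /\ star p = p.

Definition star_clean (R : StarRing) : Prop :=
  forall x : R, exists u p : R, is_unit u /\ is_proj p /\ x = add u p.

Definition weakly_star_clean_elt {R : StarRing} (x : R) : Prop :=
  exists u p : R, is_unit u /\ is_proj p /\ (x = add u p \/ x = add u (opp p)).

Definition weakly_star_clean (R : StarRing) : Prop :=
  forall x : R, weakly_star_clean_elt x.

Section Product.
Variable (I : Type) (R : I -> StarRing).

Let T := forall i, R i.
Let pzero : T := fun i => zero.
Let pone : T := fun i => one.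
Let padd (x y : T) : T := fun i => add (x i) (y i).
Let popp (x : T) : T := fun i => opp (x i).
Let pmul (x y : T) : T := fun i => mul (x i) (y i).
Let pstar (x : T) : T := fun i => star (x i).

Ltac fe := intros; apply functional_extensionality_dep; intro i.

Definition prod_star_ring : StarRing.
Proof.
refine (@Build_StarRing T pzero pone padd popp pmul pstar _ _ _ _ _ _ _ _ _ _ _ _);
  fe; unfold padd, popp, pmul, pstar, pzero, pone.
- apply addA. - apply addC. - apply add0. - apply addN. - apply mulA.
- apply mul1l. - apply mul1r. - apply mulDl. - apply mulDr.
- apply starD. - apply starM. - apply starK.
Defined.

End Product.

(* Main.v *)
Require Import Defs.
From Stdlib Require Import Classical ClassicalEpsilon FunctionalExtensionality ProofIrrelevance.

Section Basic.
Variable R : StarRing.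
Implicit Types x y a : R.

Lemma addr0 x : add x zero = x.
Proof. rewrite addC; apply add0. Qed.
Lemma addNr x : add x (opp x) = zero.
Proof. rewrite addC; apply addN. Qed.
Lemma addIl a x y : add a x = add a y -> x = y.
Proof.
intro H. rewrite <- (add0 _ x), <- (add0 _ y), <- (addN _ a), <- !addA, H. reflexivity.
Qed.
Lemma oppK x : opp (opp x) = x.
Proof. apply (addIl (opp x)). rewrite addNr, addN. reflexivity. Qed.
Lemma mul0r x : mul zero x = zero.
Proof.
apply (addIl (mul zero x)). rewrite <- mulDl, add0, addr0. reflexivity.
Qed.
Lemma mulr0 x : mul x zero = zero.
Proof.
apply (addIl (mul x zero)). rewrite <- mulDr, add0, addr0. reflexivity.
Qed.
Lemma mulNl x y : mul (opp x) y = opp (mul x y).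
Proof.
apply (addIl (mul x y)). rewrite <- mulDl, addNr, addNr, mul0r. reflexivity.
Qed.
Lemma mulNr x y : mul x (opp y) = opp (mul x y).
Proof.
apply (addIl (mul x y)). rewrite <- mulDr, addNr, addNr, mulr0. reflexivity.
Qed.
Lemma mulNN x y : mul (opp x) (opp y) = mul x y.
Proof. rewrite mulNl, mulNr, oppK. reflexivity. Qed.
Lemma oppD x y : opp (add x y) = add (opp x) (opp y).
Proof.
apply (addIl (add x y)). rewrite addNr.
rewrite (addC _ x y), <- addA, (addA _ x (opp x)), addNr, add0, addNr. reflexivity.
Qed.
Lemma unitN (u : R) : is_unit u -> is_unit (opp u).
Proof. intros [v [H1 H2]]. exists (opp v). rewrite !mulNN. auto. Qed.

Lemma clean_minus : star_clean R -> forall x : R,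
  exists u p : R, is_unit u /\ is_proj p /\ x = add u (opp p).
Proof.
intros Hc x. destruct (Hc (opp x)) as [u [p [Hu [Hp E]]]].
exists (opp u), p. split; [apply unitN; auto|split; auto].
rewrite <- oppD, <- E, oppK. reflexivity.
Qed.
End Basic.

Definition inj {I : Type} {R : I -> StarRing} (a : I) (x : R a) (z : forall j, R j)
  : forall j, R j :=
  fun j => match excluded_middle_informative (a = j) with
           | left e => eq_rect a R x j e
           | right _ => z j end.

Lemma inj_at I (R : I -> StarRing) a (x : R a) z : inj a x z a = x.
Proof.
unfold inj. destruct (excluded_middle_informative (a = a)) as [e|n].
- rewrite (proof_irrelevance _ e eq_refl). reflexivity.
- exfalso; auto.
Qed.
Lemma inj_ne I (R : I -> StarRing) a (x : R a) z j : a <> j -> inj a x z j = z j.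
Proof.
intro n. unfold inj. destruct (excluded_middle_informative (a = j)); [contradiction|reflexivity].
Qed.

Lemma at_eq {I} {R : I -> StarRing} {f g : forall j, R j} i : f = g -> f i = g i.
Proof. intros ->; reflexivity. Qed.

Lemma unit_at I (R : I -> StarRing) (u : prod_star_ring R) i :
  is_unit u -> is_unit (u i).
Proof.
intros [v [H1 H2]]. exists (v i). split.
- exact (at_eq i H1). - exact (at_eq i H2).
Qed.
Lemma proj_at I (R : I -> StarRing) (p : prod_star_ring R) i :
  is_proj p -> is_proj (p i).
Proof.
intros [H1 H2]. split.
- exact (at_eq i H1). - exact (at_eq i H2).
Qed.

Theorem theorem4p11 (I : Type) (R : I -> StarRing) :
  weakly_star_clean (prod_star_ring R) <->
  ((forall a : I, weakly_star_clean (R a)) /\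
   (forall a b : I, ~ star_clean (R a) -> ~ star_clean (R b) -> a = b)).
Proof.
split.
- intro H. split.
  + intros a x.
    destruct (H (inj a x (fun j => zero))) as [u [p [Hu [Hp E]]]].
    exists (u a), (p a). split; [apply unit_at; auto|split; [apply proj_at; auto|]].
    destruct E as [E|E]; [left|right]; apply (at_eq a) in E;
      rewrite inj_at in E; exact E.
  + intros a b Ha Hb. apply NNPP. intro nab.
    apply not_all_ex_not in Ha. destruct Ha as [x Hx].
    apply not_all_ex_not in Hb. destruct Hb as [y Hy].
    destruct (H (inj a x (inj b (opp y) (fun j => zero)))) as [u [p [Hu [Hp E]]]].
    destruct E as [E|E].
    * apply (at_eq a) in E. rewrite inj_at in E.
      apply Hx. exists (u a), (p a).
      split; [apply unit_at; auto|split; [apply proj_at; auto|exact E]].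
    * apply (at_eq b) in E. rewrite inj_ne, inj_at in E by auto.
      apply Hy. exists (opp (u b)), (p b).
      split; [apply unitN, unit_at; auto|split; [apply proj_at; auto|]].
      change (y = add (opp (u b)) (p b)).
      assert (E2 : opp y = add (u b) (opp (p b))) by exact E.
      rewrite <- (oppK _ y), E2, oppD, oppK. reflexivity.
- intros [Hw Hu] x.
  assert (Hs : exists s : bool, forall j, exists up : R j * R j,
     is_unit (fst up) /\ is_proj (snd up) /\
     x j = add (fst up) (if s then snd up else opp (snd up))).
  { destruct (classic (exists a, ~ star_clean (R a))) as [[a Ha]|Hn].
    - destruct (Hw a (x a)) as [u [p [Hu0 [Hp0 [E|E]]]]].
      + exists true. intro j. destruct (classic (star_clean (R j))) as [Hc|Hc].
        * destruct (Hc (x j)) as [v [q [? [? ?]]]]. exists (v, q). auto.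
        * pose proof (Hu a j Ha Hc). subst j. exists (u, p). auto.
      + exists false. intro j. destruct (classic (star_clean (R j))) as [Hc|Hc].
        * destruct (clean_minus _ Hc (x j)) as [v [q [? [? ?]]]]. exists (v, q). auto.
        * pose proof (Hu a j Ha Hc). subst j. exists (u, p). auto.
    - exists true. intro j. destruct (classic (star_clean (R j))) as [Hc|Hc].
      + destruct (Hc (x j)) as [v [q [? [? ?]]]]. exists (v, q). auto.
      + exfalso. apply Hn. exists j. exact Hc. }
  destruct Hs as [s Hs].
  set (f := fun j => proj1_sig (constructive_indefinite_description _ (Hs j))).
  assert (Hf : forall j, is_unit (fst (f j)) /\ is_proj (snd (f j)) /\
     x j = add (fst (f j)) (if s then snd (f j) else opp (snd (f j)))).
  { intro j. unfold f. destruct (constructive_indefinite_description _ (Hs j)). exact a. }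
  exists (fun j => fst (f j) : R j), (fun j => snd (f j) : R j).
  split; [|split].
  + assert (Hv : forall j, exists v : R j, mul (fst (f j)) v = one /\ mul v (fst (f j)) = one)
      by (intro j; apply (Hf j)).
    exists (fun j => proj1_sig (constructive_indefinite_description _ (Hv j)) : R j).
    split; apply functional_extensionality_dep; intro j; simpl;
      destruct (constructive_indefinite_description _ (Hv j)); simpl; apply a.
  + split; apply functional_extensionality_dep; intro j; simpl; apply (Hf j).
  + destruct s; [left|right]; apply functional_extensionality_dep; intro j;
      simpl; apply (Hf j).
Qed.
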